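(* Let $k$ be a non-archimedean local field of characteristic different from $2$, let $G=\mathrm{GSp}(4,k)$, and let $P$, $Q$, $H$, $\mathbf{s}_2$ be as in the context. Then $G=QH$, and there is a disjoint double coset decomposition $G=PH\sqcup P\mathbf{s}_2H$.
   Context: $G=\mathrm{GSp}(4,k)=\{g\in \mathrm{GL}(4,k)\mid g^tJg=\lambda_G(g)J\}$ with $J=\begin{pmatrix}0&E_2\\-E_2&0\end{pmatrix}$ and similitude factor $\lambda_G(g)\in k^\times$. Let $e_1,e_2,e_1^*,e_2^*$ be the standard basis of $k^4$ and $L_0=ke_1\oplus ke_2$. $P$ is the Siegel parabolic subgroup (the stabilizer of $L_0$ in $G$) and $Q$ is the Klingen parabolic subgroup (the stabilizer of the line $ke_1$ in $G$). $\mathbf{s}_2=\begin{pmatrix}1&0&0&0\\0&0&0&1\\0&0&1&0\\0&-1&0&0\end{pmatrix}$. Fix a non-square $\alpha\in k^\times$, $K=k(\sqrt{\alpha})$, and write $a=a_1+a_2\sqrt\alpha$ ($a_1,a_2\in k$) for $a\in K$. Let $H=\{g\in\mathrm{GL}(2,K)\mid \det g\in k^\times\}$, identified with a subgroup of $G$ via the embedding $\begin{pmatrix}a&b\\c&d\end{pmatrix}\mapsto \begin{pmatrix} a_1&a_2\alpha&b_1&b_2\\ a_2&a_1&b_2&b_1/\alpha\\ c_1&c_2\alpha&d_1&d_2\\ c_2\alpha&c_1\alpha&d_2\alpha&d_1\end{pmatrix}.$ *)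

(* Defs.v *)
From HB Require Import structures.
From mathcomp Require Import all_boot all_order all_algebra.
Set Implicit Arguments. Unset Strict Implicit. Unset Printing Implicit Defensive.
Import Order.TTheory GRing.Theory Num.Theory.
Local Open Scope ring_scope.

(* The valuation [v] is only
   meaningful on nonzero elements (v 0 = +oo is encoded by case splits). *)
Definition is_nonarch_local_field (k : fieldType) : Prop :=
  exists v : k -> int,
    (forall x y : k, x != 0 -> y != 0 -> v (x * y) = v x + v y) /\
    (forall x y : k, x != 0 -> y != 0 -> x + y != 0 ->
        Num.min (v x) (v y) <= v (x + y)) /\
    (exists pi : k, pi != 0 /\ v pi = 1) /\
    (* finite residue field: finitely many representatives of O / m *)
    (exists s : seq k, forall x : k, (x == 0 \/ (x != 0 /\ 0 <= v x)) ->
        exists2 r, r \in s & (x - r == 0 \/ (x - r != 0 /\ 0 < v (x - r)))) /\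
    (forall u : nat -> k,
       (forall n : nat, exists N : nat, forall m p : nat, (N <= m)%N -> (N <= p)%N ->
          u m - u p = 0 \/ (u m - u p != 0 /\ n%:Z <= v (u m - u p))) ->
       exists l : k, forall n : nat, exists N : nat, forall m : nat, (N <= m)%N ->
          u m - l = 0 \/ (u m - l != 0 /\ n%:Z <= v (u m - l))).

Section GSp.
Variable k : fieldType.

Definition Jmx : 'M[k]_4 :=
  \matrix_(i < 4, j < 4)
    (if ((i : nat) == 0%N) && ((j : nat) == 2%N) then 1
     else if ((i : nat) == 1%N) && ((j : nat) == 3%N) then 1
     else if ((i : nat) == 2%N) && ((j : nat) == 0%N) then -1
     else if ((i : nat) == 3%N) && ((j : nat) == 1%N) then -1
     else 0).

Definition inGSp4 (g : 'M[k]_4) : Prop :=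
  g \in unitmx /\ exists lam : k, lam != 0 /\ g^T *m Jmx *m g = lam *: Jmx.

(* standard basis vectors of k^4 (as row vectors), indices 0..3 for
   e1, e2, e1*, e2* *)
Definition evec (i : 'I_4) : 'rV[k]_4 := delta_mx 0 i.

Definition L0mx : 'M[k]_(2, 4) := col_mx (evec 0) (evec 1).

(* g acts on column vectors; the image of the subspace spanned by the rows
   of X is spanned by the rows of X *m g^T. *)
Definition stabilizes m (g : 'M[k]_4) (X : 'M[k]_(m, 4)) : bool :=
  (X *m g^T == X)%MS.

Definition inP (g : 'M[k]_4) : Prop := inGSp4 g /\ stabilizes g L0mx.

Definition inQ (g : 'M[k]_4) : Prop := inGSp4 g /\ stabilizes g (evec 0).

Definition s2 : 'M[k]_4 :=
  \matrix_(i < 4, j < 4)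
    (if ((i : nat) == 0%N) && ((j : nat) == 0%N) then 1
     else if ((i : nat) == 1%N) && ((j : nat) == 3%N) then 1
     else if ((i : nat) == 2%N) && ((j : nat) == 2%N) then 1
     else if ((i : nat) == 3%N) && ((j : nat) == 1%N) then -1
     else 0).

(* An element a = a1 + a2 sqrt(alpha) of K is encoded by the pair (a1, a2). *)
Definition Kmul (alpha : k) (x y : k * k) : k * k :=
  (x.1 * y.1 + alpha * x.2 * y.2, x.1 * y.2 + x.2 * y.1).
Definition Ksub (x y : k * k) : k * k := (x.1 - y.1, x.2 - y.2).

Definition embH (alpha : k) (a b c d : k * k) : 'M[k]_4 :=
  \matrix_(i < 4, j < 4)
   nth 0 (nth [::]
     [:: [:: a.1; a.2 * alpha; b.1; b.2];
         [:: a.2; a.1; b.2; b.1 / alpha];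
         [:: c.1; c.2 * alpha; d.1; d.2];
         [:: c.2 * alpha; c.1 * alpha; d.2 * alpha; d.1] ] i) j.

Definition inH (alpha : k) (h : 'M[k]_4) : Prop :=
  exists a b c d : k * k,
    let det := Ksub (Kmul alpha a d) (Kmul alpha b c) in
    det.2 = 0 /\ det.1 != 0 /\ h = embH alpha a b c d.

End GSp.

(* Main.v *)
Require Import Defs.
From mathcomp Require Import all_boot all_order all_algebra.
From mathcomp Require Import ring.
Import GRing.Theory.
Local Open Scope ring_scope.
Set Implicit Arguments. Unset Strict Implicit.

Section SA.
Variable k : fieldType.
Variable alpha : k.
Hypothesis a0 : alpha != 0.

Definition Kadd (x y : k * k) : k * k := (x.1 + y.1, x.2 + y.2).

Ltac mx4 := apply/matrixP;
  case => [[|[|[|[|//]]]] ?]; case => [[|[|[|[|//]]]] Hj];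
  rewrite !mxE ?big_ord_recr ?big_ord0 /= ?mxE ?big_ord_recr ?big_ord0 /= ?mxE /=.

Lemma embH_mul a b c d a' b' c' d' :
  embH alpha a b c d *m embH alpha a' b' c' d' =
  embH alpha (Kadd (Kmul alpha a a') (Kmul alpha b c'))
             (Kadd (Kmul alpha a b') (Kmul alpha b d'))
             (Kadd (Kmul alpha c a') (Kmul alpha d c'))
             (Kadd (Kmul alpha c b') (Kmul alpha d d')).
Proof.
mx4.
all: rewrite /Kadd /Kmul /=.
all: try field; auto.
Qed.

Definition Kopp (x : k * k) : k * k := (- x.1, - x.2).
Definition Ksc (e : k) (x : k * k) : k * k := (e * x.1, e * x.2).
Definition Kdet (a b c d : k * k) := Ksub (Kmul alpha a d) (Kmul alpha b c).
Definition Hinv a b c d :=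
  let e := ((Kdet a b c d).1)^-1 in
  embH alpha (Ksc e d) (Ksc e (Kopp b)) (Ksc e (Kopp c)) (Ksc e a).

Lemma embH_one : embH alpha (1,0) (0,0) (0,0) (1,0) = 1%:M.
Proof. mx4; by rewrite ?mul0r ?mulr0. Qed.

Lemma embH_inv a b c d : (Kdet a b c d).2 = 0 -> (Kdet a b c d).1 != 0 ->
  embH alpha a b c d *m Hinv a b c d = 1%:M.
Proof.
move=> h2 h1; rewrite /Hinv embH_mul.
set e := _^-1.
have he : e * (Kdet a b c d).1 = 1 by rewrite mulVf.
move: h2 he; rewrite /Kdet /Ksub /Kmul /= => h2 he.
rewrite -embH_one /Kadd /Kmul /Ksc /Kopp /=; congr embH; congr pair.
- by rewrite -he; ring.
- by rewrite -(mulr0 e) -h2; ring.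
- ring.
- ring.
- ring.
- ring.
- by rewrite -he; ring.
- by rewrite -(mulr0 e) -h2; ring.
Qed.

Lemma Hinv_H a b c d : (Kdet a b c d).2 = 0 -> (Kdet a b c d).1 != 0 ->
  inH alpha (Hinv a b c d).
Proof.
move=> h2 h1; rewrite /Hinv; set e := _^-1.
have he : e * (Kdet a b c d).1 = 1 by rewrite mulVf.
have e0 : e != 0 by rewrite invr_eq0.
move: h2 he; rewrite /Kdet /Ksub /Kmul /= => h2 he.
do 4 eexists; split; last split; last reflexivity; rewrite /Ksub /Kmul /Ksc /Kopp /=.
- by rewrite -(mulr0 (e*e)) -h2; ring.
- have -> : e * d.1 * (e * a.1) + alpha * (e * d.2) * (e * a.2) -
    (e * - b.1 * (e * - c.1) + alpha * (e * - b.2) * (e * - c.2)) = e * (e * (a.1 * d.1 + alpha * a.2 * d.2 - (b.1 * c.1 + alpha * b.2 * c.2))) by ring.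
  by rewrite he mulr1.
Qed.

Definition J2 : 'M[k]_4 := \matrix_(i < 4, j < 4)
    (if ((i : nat) == 0%N) && ((j : nat) == 3%N) then 1
     else if ((i : nat) == 1%N) && ((j : nat) == 2%N) then alpha
     else if ((i : nat) == 2%N) && ((j : nat) == 1%N) then - alpha
     else if ((i : nat) == 3%N) && ((j : nat) == 0%N) then -1
     else 0).

Lemma embH_sympl a b c d :
  (embH alpha a b c d)^T *m Jmx k *m embH alpha a b c d =
  (Kdet a b c d).1 *: Jmx k + (Kdet a b c d).2 *: J2.
Proof.
mx4; rewrite /Kdet /Ksub /Kmul /=; field; rewrite ?a0 //.
Qed.

Lemma embH_unit a b c d : (Kdet a b c d).2 = 0 -> (Kdet a b c d).1 != 0 ->
  embH alpha a b c d \in unitmx.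
Proof. by move=> h2 h1; case: (mulmx1_unit (embH_inv h2 h1)). Qed.

Lemma embH_GSp a b c d : (Kdet a b c d).2 = 0 -> (Kdet a b c d).1 != 0 ->
  inGSp4 (embH alpha a b c d).
Proof.
move=> h2 h1; split; first exact: embH_unit.
exists (Kdet a b c d).1; split => //.
by rewrite embH_sympl h2 scale0r addr0.
Qed.

Lemma inH_GSp h : inH alpha h -> inGSp4 h.
Proof. by case=> [a [b [c [d [h2 [h1 ->]]]]]]; apply: embH_GSp. Qed.

Lemma GSp_mul (g h : 'M[k]_4) : inGSp4 g -> inGSp4 h -> inGSp4 (g *m h).
Proof.
case=> ug [l [l0 hl]] [uh [m [m0 hm]]]; split; first by rewrite unitmx_mul ug.
exists (l * m); split; first by rewrite mulf_neq0.
rewrite trmx_mul -!mulmxA (mulmxA g^T) (mulmxA (g^T *m _)) hl.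
by rewrite -scalemxAl -scalemxAr mulmxA hm scalerA mulrC.
Qed.

Lemma s2_orth : s2 k *m (s2 k)^T = 1%:M.
Proof. by mx4; rewrite ?mulr0 ?mul0r ?addr0 ?add0r ?mulrN ?mulNr ?opprK ?mulr1. Qed.

Lemma s2T_orth : (s2 k)^T *m s2 k = 1%:M.
Proof. by mx4; rewrite ?mulr0 ?mul0r ?addr0 ?add0r ?mulrN ?mulNr ?opprK ?mulr1. Qed.

Lemma s2_GSp : inGSp4 (s2 k).
Proof.
split; first by case: (mulmx1_unit s2_orth).
exists 1; split; first exact: oner_neq0.
rewrite scale1r; mx4; ring.
Qed.

Lemma s2T_GSp : inGSp4 (s2 k)^T.
Proof.
split; first by case: (mulmx1_unit s2_orth).
exists 1; split; first exact: oner_neq0.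
rewrite scale1r; mx4; ring.
Qed.
End SA.

Section SB.
Variable k : fieldType.
Definition o0 : 'I_4 := @Ordinal 4 0 isT.
Definition o1 : 'I_4 := @Ordinal 4 1 isT.
Definition o2 : 'I_4 := @Ordinal 4 2 isT.
Definition o3 : 'I_4 := @Ordinal 4 3 isT.

Lemma L0E i j : L0mx k i j = ((i : nat) == j)%:R.
Proof.
case: i => [[|[|//]] ?]; case: j => [[|[|[|[|//]]]] ?]; rewrite /L0mx /evec mxE; case: splitP => //= l; rewrite mxE /=.
all: case: l => -[|m] Hm /= hl; rewrite -?val_eqE //=.
Qed.

Lemma L0mxE : L0mx k = \matrix_(i < 2, j < 4) ((i : nat) == j)%:R.
Proof. by apply/matrixP => i j; rewrite L0E mxE. Qed.

Lemma L0_subE (r : 'rV[k]_4) : (r <= L0mx k)%MS -> r 0 o2 = 0 /\ r 0 o3 = 0.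
Proof.
move/submxP => [D ->]; rewrite L0mxE !mxE !big_ord_recr !big_ord0 /= ?mxE /=.
by rewrite !mulr0 !addr0; split.
Qed.

Lemma L0_sub (r : 'rV[k]_4) : r 0 o2 = 0 -> r 0 o3 = 0 -> (r <= L0mx k)%MS.
Proof.
move=> h2 h3; apply/submxP; exists (\row_(j < 2) r 0 (widen_ord (isT : (2 <= 4)%N) j)).
apply/rowP => j; rewrite L0mxE !mxE !big_ord_recr !big_ord0 /= ?mxE /=.
case: j => [[|[|[|[|//]]]] ?] /=; rewrite ?mulr0 ?mulr1 ?add0r ?addr0 //.
all: first [by congr (r 0 _); apply: val_inj | by rewrite -[RHS]h2; congr (r 0 _); apply: val_inj | by rewrite -[RHS]h3; congr (r 0 _); apply: val_inj].
Qed.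

Lemma stabP_cols (p : 'M[k]_4) : p \in unitmx ->
  p o2 o0 = 0 -> p o3 o0 = 0 -> p o2 o1 = 0 -> p o3 o1 = 0 -> stabilizes p (L0mx k).
Proof.
move=> pu h20 h30 h21 h31.
have s1 : (L0mx k *m p^T <= L0mx k)%MS.
{ apply/row_subP => i; apply: L0_sub; rewrite L0mxE !mxE !big_ord_recr !big_ord0 /= ?mxE ;
  case: i => [[|[|//]] ?] /=; rewrite ?mul0r ?mul1r ?add0r ?addr0 //.
  all: first [by rewrite -[RHS]h20; congr (p _ _); apply: val_inj
             | by rewrite -[RHS]h30; congr (p _ _); apply: val_inj
             | by rewrite -[RHS]h21; congr (p _ _); apply: val_inj
             | by rewrite -[RHS]h31; congr (p _ _); apply: val_inj]. }
rewrite /stabilizes s1 /= -(mxrank_leqif_sup s1).2 mxrankMfree //.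
by rewrite row_free_unit unitmx_tr.
Qed.

Lemma stabP_inv (p : 'M[k]_4) (r : 'rV[k]_4) : stabilizes p (L0mx k) -> p \in unitmx ->
  (r *m p^T <= L0mx k)%MS -> (r <= L0mx k)%MS.
Proof.
case/andP => _ s pu hr.
have : (r *m p^T <= L0mx k *m p^T)%MS by apply: submx_trans s.
by rewrite submxMfree // row_free_unit unitmx_tr.
Qed.

Lemma stabP_img (p : 'M[k]_4) (r : 'rV[k]_4) : stabilizes p (L0mx k) ->
  (r <= L0mx k)%MS -> (r *m p^T <= L0mx k)%MS.
Proof.
case/andP => s _ hr; apply: submx_trans s; exact: submxMr.
Qed.

Lemma stabQ_col (q : 'M[k]_4) : (forall i, q i o0 = (i == o0)%:R) -> stabilizes q (evec k 0).
Proof.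
move=> hq; rewrite /stabilizes.
have -> : evec k 0 *m q^T = evec k 0.
  apply/rowP => j; rewrite !mxE !big_ord_recr !big_ord0 /= ?mxE/=.
  rewrite mul1r !mul0r !addr0 add0r.
  have -> : widen_ord (leqnSn 3) (widen_ord (leqnSn 2) (widen_ord (leqnSn 1) (@ord_max 0))) = o0 by apply: val_inj.
  by rewrite hq -!val_eqE.
by apply/andP; split; apply: submx_refl.
Qed.
End SB.

Section SC.
Variable k : fieldType.
Variable alpha : k.
Hypothesis a0 : alpha != 0.
Hypothesis hns : ~ (exists x : k, x ^+ 2 = alpha).

Lemma w0 : widen_ord (leqnSn 3) (widen_ord (leqnSn 2) (widen_ord (leqnSn 1) (@ord_max 0))) = o0.
Proof. exact: val_inj. Qed.
Lemma w1 : widen_ord (leqnSn 3) (widen_ord (leqnSn 2) (@ord_max 1)) = o1.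
Proof. exact: val_inj. Qed.
Lemma w2 : widen_ord (leqnSn 3) (@ord_max 2) = o2.
Proof. exact: val_inj. Qed.
Lemma w3 : @ord_max 3 = o3.
Proof. exact: val_inj. Qed.

Lemma norm_nz p q : (p != 0) || (q != 0) -> p * p - alpha * q * q != 0.
Proof.
move=> hpq; apply/eqP => h; apply: hns.
have [q0|q0] := eqVneq q 0.
  move: hpq h; rewrite q0 eqxx orbF mulr0 subr0 => /negPf hp /eqP.
  by rewrite mulf_eq0 hp.
exists (p / q); apply: (mulIf (mulf_neq0 q0 q0)).
rewrite expr2; have -> : alpha * (q * q) = p * p by rewrite -[RHS]subr0 -h; ring.
by field.
Qed.

Lemma col0_H x1 x2 x3 x4 : ~~ [&& x1 == 0, x2 == 0, x3 == 0 & x4 == 0] ->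
  exists b d, (Kdet alpha (x1, x2) b (x3, x4 / alpha) d).2 = 0 /\
              (Kdet alpha (x1, x2) b (x3, x4 / alpha) d).1 != 0.
Proof.
move=> hx.
have [h12|h12] := boolP ((x1 != 0) || (x2 != 0)).
  exists (0, 0), (x1, - x2); rewrite /Kdet /Ksub /Kmul /=; split; first by ring.
  have -> : x1 * x1 + alpha * x2 * - x2 - (0 * x3 + alpha * 0 * (x4 / alpha)) =
    x1 * x1 - alpha * x2 * x2 by ring.
  exact: norm_nz.
have h34 : (x3 != 0) || (x4 / alpha != 0).
  move: hx h12; rewrite negb_or !negbK => hx /andP [/eqP e1 /eqP e2].
  move: hx; rewrite e1 e2 eqxx /= mulf_eq0 invr_eq0 (negPf a0) orbF.
  by rewrite negb_and.
exists (- x3, x4 / alpha), (0, 0); rewrite /Kdet /Ksub /Kmul /=; split; first by ring.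
have -> : x1 * 0 + alpha * x2 * 0 - (- x3 * x3 + alpha * (x4 / alpha) * (x4 / alpha)) =
  x3 * x3 - alpha * (x4 / alpha) * (x4 / alpha) by ring.
exact: norm_nz.
Qed.

Ltac expand := rewrite ?mxE ?big_ord_recr ?big_ord0 /= ?mxE ?big_ord_recr ?big_ord0 /= ?mxE /= ?w0 ?w1 ?w2 ?w3.

Lemma J_inv (g : 'M[k]_4) l : g \in unitmx -> g^T *m Jmx k *m g = l *: Jmx k ->
  Jmx k *m g = l *: ((invmx g)^T *m Jmx k).
Proof.
move=> gu hl.
have e : (invmx g)^T *m g^T = 1%:M by rewrite -trmx_mul mulmxV // trmx1.
by rewrite -[Jmx k *m g]mul1mx -e -mulmxA (mulmxA g^T) hl -scalemxAr.
Qed.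

Lemma lagr (g : 'M[k]_4) l : g \in unitmx -> l != 0 -> g^T *m Jmx k *m g = l *: Jmx k ->
  (invmx g)^T *m Jmx k *m invmx g = l^-1 *: Jmx k.
Proof.
move=> gu l0 hl.
have e : Jmx k = l *: ((invmx g)^T *m Jmx k *m invmx g).
  by rewrite scalemxAl -J_inv // -mulmxA mulmxV // mulmx1.
by rewrite [in RHS]e scalerA mulVf // scale1r.
Qed.

Lemma lagr01 (g : 'M[k]_4) l : g \in unitmx -> l != 0 -> g^T *m Jmx k *m g = l *: Jmx k ->
  let X := invmx g in
  X o0 o0 * X o2 o1 + X o1 o0 * X o3 o1 - X o2 o0 * X o0 o1 - X o3 o0 * X o1 o1 = 0.
Proof.
move=> gu l0 hl X.
have := congr1 (fun M : 'M[k]_4 => M o0 o1) (lagr gu l0 hl).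
rewrite /=; expand => h; rewrite /X.
transitivity (l^-1 * 0); last by rewrite mulr0.
rewrite -h; ring.
Qed.

Lemma nz_col (g : 'M[k]_4) : g \in unitmx ->
  ~~ [&& invmx g o0 o0 == 0, invmx g o1 o0 == 0, invmx g o2 o0 == 0 & invmx g o3 o0 == 0].
Proof.
move=> gu; apply/negP => /and4P [/eqP e0 /eqP e1 /eqP e2 /eqP e3].
have := congr1 (fun M : 'M[k]_4 => M o0 o0) (mulmxV gu).
rewrite /=; expand; rewrite e0 e1 e2 e3 !mulr0 !addr0 => /eqP.
by rewrite eq_sym oner_eq0.
Qed.

Lemma colmul (A B C : 'M[k]_4) i j : (forall l, B l j = C l j) -> (A *m B) i j = (A *m C) i j.
Proof. by move=> h; rewrite !mxE; apply: eq_bigr => l _; rewrite h. Qed.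

Lemma embH_col0 (X : 'I_4 -> k) b d l :
  embH alpha (X o0, X o1) b (X o2, X o3 / alpha) d l o0 = X l.
Proof.
case: l => [[|[|[|[|//]]]] ?]; rewrite mxE /= ?(mulfVK a0); congr X; exact: val_inj.
Qed.

Lemma embH_col3 (Y : 'I_4 -> k) a c l :
  embH alpha a (alpha * Y o1, Y o0) c (Y o3, Y o2) l o3 = Y l.
Proof.
case: l => [[|[|[|[|//]]]] ?]; rewrite mxE /=; try (by congr Y; exact: val_inj).
by rewrite mulrAC divff // mul1r; congr Y; exact: val_inj.
Qed.

Lemma s2T_col0 (M : 'M[k]_4) l : (M *m (s2 k)^T) l o0 = M l o0.
Proof. by expand; rewrite !mulr0 !mulr1 !addr0 !add0r. Qed.

Lemma s2T_col1 (M : 'M[k]_4) l : (M *m (s2 k)^T) l o1 = M l o3.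
Proof. by expand; rewrite !mulr0 !mulr1 !addr0 !add0r. Qed.

Lemma one_col (g : 'M[k]_4) i j : g \in unitmx -> (g *m invmx g) i j = ((i : nat) == j)%:R.
Proof. by move=> gu; rewrite mulmxV // mxE. Qed.

Lemma fwd1 (g : 'M[k]_4) : inGSp4 g -> exists q h, inQ q /\ inH alpha h /\ g = q *m h.
Proof.
case=> gu [l [l0 hl]].
have [b [d [h2 h1]]] := col0_H (nz_col gu).
set X := invmx g.
exists (g *m embH alpha (X o0 o0, X o1 o0) b (X o2 o0, X o3 o0 / alpha) d).
exists (Hinv alpha (X o0 o0, X o1 o0) b (X o2 o0, X o3 o0 / alpha) d).
split; [split | split].
- apply: GSp_mul; first by split => //; exists l.
  exact: embH_GSp.
- apply: stabQ_col => i.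
  rewrite (@colmul _ _ X) ?one_col // => m.
  exact: (embH_col0 (fun m => X m o0)).
- exact: Hinv_H.
- by rewrite -mulmxA embH_inv // mulmx1.
Qed.

Lemma Jrow0 (M : 'M[k]_4) j : (Jmx k *m M) o0 j = M o2 j.
Proof. by expand; rewrite !mul0r !mul1r !addr0 !add0r. Qed.
Lemma Jrow1 (M : 'M[k]_4) j : (Jmx k *m M) o1 j = M o3 j.
Proof. by expand; rewrite !mul0r !mul1r !addr0 !add0r. Qed.

Lemma fwd2 (g : 'M[k]_4) : inGSp4 g ->
  (exists p h, inP p /\ inH alpha h /\ g = p *m h) \/
  (exists p h, inP p /\ inH alpha h /\ g = p *m s2 k *m h).
Proof.
case=> gu [l [l0 hl]].
have hlag := lagr01 gu l0 hl.
set X := invmx g in hlag *.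
pose a := (X o0 o0, X o1 o0); pose c := (X o2 o0, X o3 o0 / alpha).
pose b := (alpha * X o1 o1, X o0 o1); pose d := (X o3 o1, X o2 o1).
have h2 : (Kdet alpha a b c d).2 = 0.
  rewrite -hlag /Kdet /Ksub /Kmul /a /b /c /d /=; field; exact: a0.
have JM := J_inv gu hl.
have [h1|h1] := eqVneq (Kdet alpha a b c d).1 0.
- left.
  have [b' [d' [h2' h1']]] := col0_H (nz_col gu).
  rewrite -/X in h2' h1'.
  have hu := embH_unit a0 h2' h1'.
  have JP : Jmx k *m (g *m embH alpha a b' c d') = l *: ((invmx g)^T *m Jmx k *m embH alpha a b' c d').
    by rewrite mulmxA JM -scalemxAl.
  exists (g *m embH alpha a b' c d'); exists (Hinv alpha a b' c d').
  split; [split | split].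
  + apply: GSp_mul; first by split => //; exists l.
    exact: embH_GSp.
  + apply: stabP_cols; first by rewrite unitmx_mul gu.
    * rewrite (@colmul _ _ X) ?one_col // => m; exact: (embH_col0 (fun m => X m o0)).
    * rewrite (@colmul _ _ X) ?one_col // => m; exact: (embH_col0 (fun m => X m o0)).
    * rewrite -Jrow0 JP; rewrite -/X /a /c; expand; field; exact: a0.
    * rewrite -Jrow1 JP; rewrite -/X /a /c.
      transitivity (- l * (Kdet alpha a b c d).1); last by rewrite h1 mulr0.
      rewrite /Kdet /Ksub /Kmul /a /b /c /d /=; expand; field; exact: a0.
  + exact: Hinv_H.
  + by rewrite -mulmxA embH_inv // mulmx1.
- right.
  have hu := embH_unit a0 h2 h1.
  exists (g *m embH alpha a b c d *m (s2 k)^T); exists (Hinv alpha a b c d).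
  split; [split | split].
  + apply: GSp_mul; last exact: s2T_GSp.
    apply: GSp_mul; first by split => //; exists l.
    exact: embH_GSp.
  + apply: stabP_cols; first by rewrite !unitmx_mul gu hu; case: (s2T_GSp k).
    * rewrite -mulmxA (@colmul _ _ X) ?one_col // => m; rewrite s2T_col0; exact: (embH_col0 (fun m => X m o0)).
    * rewrite -mulmxA (@colmul _ _ X) ?one_col // => m; rewrite s2T_col0; exact: (embH_col0 (fun m => X m o0)).
    * rewrite -mulmxA (@colmul _ _ X) ?one_col // => m; rewrite s2T_col1; exact: (embH_col3 (fun m => X m o1)).
    * rewrite -mulmxA (@colmul _ _ X) ?one_col // => m; rewrite s2T_col1; exact: (embH_col3 (fun m => X m o1)).
  + exact: Hinv_H.
  + by rewrite -!mulmxA (mulmxA (s2 k)^T) s2T_orth mul1mx embH_inv // mulmx1.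
Qed.

Lemma row2_zero (M : 'M[k]_4) : M \in unitmx ->
  M o2 o0 = 0 -> M o2 o1 = 0 -> M o2 o2 = 0 -> M o2 o3 = 0 -> False.
Proof.
move=> Mu e0 e1 e2 e3.
have := congr1 (fun N : 'M[k]_4 => N o2 o2) (mulmxV Mu).
rewrite /= [in LHS]mxE !big_ord_recr big_ord0 /= ?w0 ?w1 ?w2 ?w3 e0 e1 e2 e3 !mul0r !addr0 mxE /= => /eqP.
by rewrite eq_sym oner_eq0.
Qed.

Lemma evec_s2T0 : evec k 0 *m (s2 k)^T = evec k 0.
Proof.
apply/rowP => j; expand; case: j => [[|[|[|[|//]]]] ?] /=; rewrite /=.
all: by rewrite ?mulr0 ?mul0r ?mulr1 ?mul1r ?add0r ?addr0.
Qed.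

Lemma evec_s2T3 : evec k o3 *m (s2 k)^T = evec k 1.
Proof.
apply/rowP => j; expand; case: j => [[|[|[|[|//]]]] ?] /=; rewrite /=.
all: by rewrite ?mulr0 ?mul0r ?mulr1 ?mul1r ?add0r ?addr0.
Qed.

Lemma evec_L0 i : (i = 0 \/ i = 1) -> (evec k i <= L0mx k)%MS.
Proof.
by case=> ->; apply: L0_sub; rewrite !mxE.
Qed.

Lemma evec_hT (h : 'M[k]_4) i j : (evec k i *m h^T) 0 j = h j i.
Proof. by rewrite /evec -rowE !mxE. Qed.

Lemma disj : ~ (exists p1 h1 p2 h2,
       inP p1 /\ inH alpha h1 /\ inP p2 /\ inH alpha h2 /\
       p1 *m h1 = p2 *m s2 k *m h2).
Proof.
case=> p1 [h1 [p2 [h2 [[P1g P1s] [[a1 [b1 [c1 [d1 [e2 [e1 Eh1]]]]]] [[P2g P2s] [[a2 [b2 [c2 [d2 [f2 [f1 Eh2]]]]]] E]]]]]]].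
subst h1 h2.
have hu2 := (mulmx1_unit (embH_inv a0 f2 f1)).2.
pose h := embH alpha a1 b1 c1 d1 *m Hinv alpha a2 b2 c2 d2.
have hu : h \in unitmx by rewrite unitmx_mul hu2 (embH_unit a0 e2 e1).
have E' : p1 *m h = p2 *m s2 k.
  by rewrite /h mulmxA E -mulmxA embH_inv // mulmx1.
have key : forall i i', evec k i *m (s2 k)^T = evec k i' -> (i' = 0 \/ i' = 1) ->
    (evec k i *m h^T <= L0mx k)%MS.
  move=> i i' ei hi'; apply: (stabP_inv P1s P1g.1).
  rewrite -mulmxA -trmx_mul E' trmx_mul mulmxA ei.
  by apply: stabP_img P2s _; apply: evec_L0.
have [r0 r1] := L0_subE (key 0 0 evec_s2T0 (or_introl erefl)).
have [r2 r3] := L0_subE (key o3 1 evec_s2T3 (or_intror erefl)).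
rewrite !evec_hT in r0 r1 r2 r3.
have q1 : h o2 o1 = h o3 o0 by rewrite /h /Hinv embH_mul // /embH !mxE.
have q2 : h o2 o2 = h o3 o3 by rewrite /h /Hinv embH_mul // /embH !mxE.
have z : (0 : 'I_4) = o0 by apply: val_inj.
rewrite z in r0 r1.
by apply: (row2_zero hu); rewrite ?q1 ?q2.
Qed.
End SC.

Unset Implicit Arguments.

Theorem lemma2p3 (k : fieldType) (alpha : k) :
  is_nonarch_local_field k ->
  (2%:R : k) != 0 ->
  alpha != 0 ->
  ~ (exists x : k, x ^+ 2 = alpha) ->
  (* G = Q H *)
  (forall g : 'M[k]_4,
     inGSp4 g <-> exists q h, inQ q /\ inH alpha h /\ g = q *m h) /\
  (* G = P H  u  P s2 H *)
  (forall g : 'M[k]_4,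
     inGSp4 g <->
       ((exists p h, inP p /\ inH alpha h /\ g = p *m h) \/
        (exists p h, inP p /\ inH alpha h /\ g = p *m s2 k *m h))) /\
  (* ... and the union is disjoint *)
  ~ (exists p1 h1 p2 h2,
       inP p1 /\ inH alpha h1 /\ inP p2 /\ inH alpha h2 /\
       p1 *m h1 = p2 *m s2 k *m h2).
Proof.
move=> _ _ a0 hns; split; [|split].
- move=> g; split; first exact: fwd1 a0 hns g.
  case=> q [h [[qg _] [hh ->]]]; exact: GSp_mul qg (inH_GSp a0 hh).
- move=> g; split; first exact: fwd2 a0 hns g.
  case=> [[p [h [[pg _] [hh ->]]]] | [p [h [[pg _] [hh ->]]]]].
  + exact: GSp_mul pg (inH_GSp a0 hh).
  + apply: GSp_mul (inH_GSp a0 hh); exact: GSp_mul pg (s2_GSp k).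
- exact: disj a0.
Qed.
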